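(* For $d\ge1$ let $$A_d=\frac1{d!}\sum_{(i_d,\dots,i_1)\in[m+n]^d}L(e_{i_d})\cdots L(e_{i_1})L(e_{i_1}^\ast)\cdots L(e_{i_d}^\ast).$$ Then $A_d(\varphi)=\varphi$ for every $\varphi\in\overline T_d(V)$.
   Context: Let $m,n\ge 1$ and $V=\mathbb C^{m|n}$ with standard basis $e_1,\dots,e_{m+n}$, where $|e_i|=0$ for $i\le m$ and $|e_i|=1$ for $i>m$; let $e_1^\ast,\dots,e_{m+n}^\ast$ be the dual basis with $|e_i^\ast|=|e_i|$. $[m+n]=\{1,\dots,m+n\}$. All vectors are homogeneous. A pure tensor $v_d\otimes\cdots\otimes v_1\in V^{\otimes d}$ is written $v_d\cdots v_1$ (factors indexed decreasingly from left to right). $\mathfrak S_d$ is the symmetric group on $\{1,\dots,d\}$, $s_i=(i\ i+1)$, $\mathfrak S_\infty=\bigcup_d\mathfrak S_d$, and for $k\ge1$ the group homomorphism $\sigma\mapsto\sigma^{\uparrow k}$ of $\mathfrak S_\infty$ is defined by $s_i^{\uparrow k}=s_{i+k}$. The right action of $\mathfrak S_d$ on $V^{\otimes d}$ is $(v_d\cdots v_1).s_i=(-1)^{|v_i||v_{i+1}|}v_d\cdots v_{i+2}v_iv_{i+1}v_{i-1}\cdots v_1$ (the factors in positions $i,i+1$ are swapped). Set $\overline T_d(V)=V^{\otimes d}\otimes_{\mathbb C\mathfrak S_d}\mathbb C\mathfrak S_\infty$ (so $\overline T_0(V)=\mathbb C\mathfrak S_\infty$) and $\overline T(V)=\bigoplus_{d\ge0}\overline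 T_d(V)$, with the associative product $(u_k\cdots u_1\otimes\tau)\cdot(v_d\cdots v_1\otimes\sigma)=u_k\cdots u_1v_d\cdots v_1\otimes\tau^{\uparrow d}\sigma$. For $\varphi\in\overline T(V)$, $L(\varphi)$ denotes left multiplication by $\varphi$; in particular $L(v)$ for $v\in V$ (identified with $v\otimes 1\in\overline T_1(V)$). For homogeneous $v^\ast\in V^\ast$, $L(v^\ast)$ is the linear map with $L(v^\ast)=0$ on $\overline T_0(V)$ and $$L(v^\ast)(v_d\cdots v_1\otimes\sigma)=\sum_{k=1}^d(-1)^{|v^\ast|(|v_d|+\cdots+|v_{k+1}|)}\langle v^\ast,v_k\rangle\, v_d\cdots\widehat{v_k}\cdots v_1\otimes s_{d-1}s_{d-2}\cdots s_k\,\sigma,$$ where $\widehat{v_k}$ means omission and the product $s_{d-1}\cdots s_k$ is $1$ for $k=d$; $L$ is extended linearly to all of $V^\ast$. *)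

(* Defs.v *)
From HB Require Import structures.
From mathcomp Require Import all_boot all_order all_algebra.
From mathcomp Require Import reals complex.
From mathcomp.multinomials Require Import monalg.

Set Implicit Arguments.
Unset Strict Implicit.
Unset Printing Implicit Defensive.

Import GRing.Theory Num.Theory.
Local Open Scope ring_scope.

(* The infinite symmetric group S_oo = finitary permutations.               *)
(* Points: S_oo acts on {1,2,3,...}; point p is encoded by the nat p-1.     *)
(* An element is encoded by the sequence [sigma 0; ...; sigma (N-1)] of its *)
(* values on an initial segment outside of which it is the identity, in the *)
(* normal form where trailing fixed points are dropped (so the encoding is  *)
(* unique and equality of permutations is equality of encodings).           *)

Definition fperm_ok (s : seq nat) : bool :=
  perm_eq s (iota 0 (size s)) && ((s == [::]) || (last 0%N s != (size s).-1)).

Record finperm := FinPerm { fperm_val :> seq nat; fperm_valP : fperm_ok fperm_val }.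

HB.instance Definition _ := [isSub for fperm_val].
HB.instance Definition _ := [Countable of finperm by <:].

Lemma fperm1_ok : fperm_ok [::]. Proof. by []. Qed.
Definition fperm1 : finperm := FinPerm fperm1_ok.

Definition fperm_fun (s : finperm) (x : nat) : nat := nth x s x.

Definition drop_fix (t : seq nat) : seq nat :=
  if t is [::] then t
  else if last 0%N t == (size t).-1 then take (size t).-1 t else t.
Definition normalize (t : seq nat) : seq nat := iter (size t) drop_fix t.

(* the finitary permutation that agrees with f on [0, N) and is the identity
   beyond (meaningful when f permutes [0, N)). *)
Definition fperm_of (N : nat) (f : nat -> nat) : finperm :=
  insubd fperm1 (normalize (mkseq f N)).

(* the transposition s_j = (j j+1) of S_oo (j >= 1), on encoded points *)
Definition transp (j x : nat) : nat :=
  if x == j.-1 then j else if x == j then j.-1 else x.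

Definition lmul_s (j : nat) (s : finperm) : finperm :=
  fperm_of (maxn (size s) j.+1) (fun x => transp j (fperm_fun s x)).

(* s_(d-1) s_(d-2) ... s_k sigma  (equal to sigma when k = d) *)
Definition cycle_mul (d k : nat) (s : finperm) : finperm :=
  foldl (fun t j => lmul_s j t) s (iota k (d - k)).

(* The free space on pure basis tensors e_{w} (x) sigma, all degrees.        *)
(* A word w : seq 'I_(m+n) of size d encodes e_{w_d} ... e_{w_1} written    *)
(* left to right, i.e. the head of the list is the factor of index d:        *)
(* v_k is the element of w at list index d-k.  Basis index i : 'I_(m+n)     *)
(* (0-based) stands for e_{i+1}; its parity is 1 iff i >= m.                *)

Section Tensor.
Variables (R : realType) (m n : nat).

Definition C := (R[i])%type.
Definition word := seq 'I_(m + n).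
Definition basis := (word * finperm)%type.
Definition F := {malg C[basis]}.

Definition par (i : 'I_(m + n)) : nat := (m <= i)%N.

Definition linext (f : basis -> F) (x : F) : F :=
  \sum_(b <- finmap.enum_fset (msupp x)) x@_b *: f b.

(* Swapping the list entries at positions a and a+1 (with the Koszul sign):
   this is the right action of s_i with a = d-i-1. *)
Definition swap_at (a : nat) (w : word) : C * word :=
  match drop a w with
  | x :: y :: r => ((-1) ^+ (par x * par y), take a w ++ y :: x :: r)
  | _ => (1, w)
  end.

(* Generator of the relation subspace of V^{(x)d} (x)_{C S_d} C S_oo:
   (v_d...v_1).s_i (x) sigma  -  v_d...v_1 (x) s_i sigma,  for 1 <= i < d. *)
Definition relgen (w : word) (i : nat) (s : finperm) : F :=
  if (0 < i < size w)%N then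
    let: (c, w') := swap_at (size w - i.+1) w in
    c *: << (w', s) >> - << (w, lmul_s i s) >>
  else 0.

Definition rel_space (x : F) : Prop :=
  exists g : seq (C * (word * nat * finperm)),
    x = \sum_(t <- g) t.1 *: relgen t.2.1.1 t.2.1.2 t.2.2.

(* x and y represent the same element of bar T(V) *)
Definition Teq (x y : F) : Prop := rel_space (x - y).

(* x represents an element of bar T_d(V) *)
Definition homog (d : nat) (x : F) : Prop :=
  forall b : basis, x@_b != 0 -> size b.1 = d.

Definition Lv (j : 'I_(m + n)) : F -> F :=
  linext (fun b => << (j :: b.1, b.2) >>).

(* L(e_j^dual), following the defining formula (k = 1..d; v_k at index d-k,
   v_d ... v_(k+1) = take (d-k) w). *)
Definition Ldual (j : 'I_(m + n)) : F -> F :=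
  linext (fun b =>
    let w := b.1 in let d := size w in
    \sum_(1 <= k < d.+1)
      (if ohead (drop (d - k) w) == Some j then
         (-1) ^+ (par j * \sum_(t <- take (d - k) w) par t) *:
           << (take (d - k) w ++ drop (d - k).+1 w, cycle_mul d k b.2) >>
       else 0)).

(* A_d = 1/d! sum_{(i_d,...,i_1)} L(e_{i_d})...L(e_{i_1}) L(e*_{i_1})...L(e*_{i_d});
   the tuple u lists (i_d, ..., i_1) from head to tail. *)
Definition A (d : nat) (x : F) : F :=
  (d`!%:R)^-1 *:
    \sum_(u : d.-tuple 'I_(m + n))
       foldr (fun i y => Lv i y) (foldl (fun y i => Ldual i y) x u) u.

End Tensor.

(* Main.v *)
Require Import Defs.
From HB Require Import structures.
From mathcomp Require Import all_boot all_order all_algebra.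
From mathcomp Require Import reals complex.
From mathcomp.multinomials Require Import monalg.
From mathcomp Require Import finmap.
Local Open Scope fset_scope.
Local Open Scope ring_scope.
Import GRing.Theory Num.Theory.

Section Aux.
Variables (R : realType) (m n : nat).
Local Notation F := (F R m n).
Local Notation C := (C R).
Local Notation word := (word m n).
Local Notation basis := (basis m n).
Local Notation linext := (@linext R m n).
Local Notation relgen := (@relgen R m n).
Local Notation swap_at := (@swap_at R m n).
Local Notation Lv := (@Lv R m n).
Local Notation Ldual := (@Ldual R m n).
Local Notation par := (@par m n).
Local Notation rel_space := (@rel_space R m n).
Local Notation Teq := (@Teq R m n).
Local Notation homog := (@homog R m n).
Local Notation I := ('I_(m + n)).

Lemma linextEw (f : basis -> F) (x : F) (D : {fset basis}) :
  msupp x `<=` D -> linext f x = \sum_(b <- D) x@_b *: f b.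
Proof.
move=> le; rewrite /linext (big_fset_incl _ le) //= => b _ /mcoeff_outdom ->.
by rewrite scale0r.
Qed.

Lemma linextD f : {morph linext f : x y / x + y}.
Proof.
move=> x y.
rewrite (@linextEw f x (msupp x `|` msupp y)) ?fsubsetUl //.
rewrite (@linextEw f y (msupp x `|` msupp y)) ?fsubsetUr //.
rewrite (@linextEw f (x + y) (msupp x `|` msupp y)) ?msuppD_le //.
by rewrite -big_split /=; apply: eq_bigr => b _; rewrite mcoeffD scalerDl.
Qed.

Lemma linextZ f (c : C) x : linext f (c *: x) = c *: linext f x.
Proof.
rewrite (@linextEw f (c *: x) (msupp x)) ?msuppZ_le // /linext scaler_sumr.
by apply: eq_bigr => b _; rewrite mcoeffZ scalerA.
Qed.

Lemma linext0 f : linext f 0 = 0.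
Proof. by have := linextZ f 0 0; rewrite !scale0r. Qed.

Lemma linext_sum f I (r : seq I) (P : pred I) (G : I -> F) :
  linext f (\sum_(i <- r | P i) G i) = \sum_(i <- r | P i) linext f (G i).
Proof.
exact: (big_morph (linext f) (linextD f) (linext0 f)).
Qed.

Lemma linextU f b : linext f << b >> = f b.
Proof. by rewrite (@linextEw f _ _ msuppU_le) big_seq_fset1 mcoeffUU scale1r. Qed.

Lemma linextB f x y : linext f (x - y) = linext f x - linext f y.
Proof. by rewrite linextD -scaleN1r linextZ scaleN1r. Qed.

Lemma linext_id x : linext (fun b => << b >>) x = x.
Proof.
rewrite [RHS]monalgE /linext; apply: eq_bigr => b _.
apply/malgP => k; rewrite mcoeffZ !mcoeffU.
by case: eqP => _; rewrite ?mulr1 ?mulr0.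
Qed.

Lemma rel0 : rel_space 0.
Proof. by exists [::]; rewrite big_nil. Qed.

Lemma relD x y : rel_space x -> rel_space y -> rel_space (x + y).
Proof. by move=> [g1 ->] [g2 ->]; exists (g1 ++ g2); rewrite big_cat. Qed.

Lemma relZ (c : C) x : rel_space x -> rel_space (c *: x).
Proof.
move=> [g ->]; exists [seq (c * t.1, t.2) | t <- g].
rewrite big_map scaler_sumr; apply: eq_bigr => t _ /=.
by rewrite scalerA.
Qed.

Lemma relN x : rel_space x -> rel_space (- x).
Proof. by move=> /(relZ (-1)); rewrite scaleN1r. Qed.

Lemma rel_sum J (r : seq J) (G : J -> F) :
  (forall j, rel_space (G j)) -> rel_space (\sum_(j <- r) G j).
Proof.
move=> H; elim: r => [|a r IH]; first by rewrite big_nil; exact: rel0.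
by rewrite big_cons; apply: relD.
Qed.

Lemma rel_relgen w i s : rel_space (relgen w i s).
Proof. by exists [:: (1, (w, i, s))]; rewrite big_seq1 scale1r. Qed.

Lemma Teq_refl x : Teq x x.
Proof. by rewrite /Teq subrr; exact: rel0. Qed.

Lemma Teq_sym x y : Teq x y -> Teq y x.
Proof. by rewrite /Teq => /relN; rewrite opprB. Qed.

Lemma Teq_trans x y z : Teq x y -> Teq y z -> Teq x z.
Proof.
rewrite /Teq => H1 H2; have := relD _ _ H1 H2.
by rewrite addrA subrK.
Qed.

Lemma Teq_eq x y : x = y -> Teq x y.
Proof. by move=> ->; exact: Teq_refl. Qed.

Lemma TeqD x1 y1 x2 y2 : Teq x1 y1 -> Teq x2 y2 -> Teq (x1 + x2) (y1 + y2).
Proof.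
rewrite /Teq => H1 H2; have := relD _ _ H1 H2.
by rewrite opprD addrACA.
Qed.

Lemma TeqZ (c : C) x y : Teq x y -> Teq (c *: x) (c *: y).
Proof. by rewrite /Teq => /(relZ c); rewrite scalerBr. Qed.

Lemma Teq_sum (J : eqType) (r : seq J) (G H : J -> F) :
  (forall j, j \in r -> Teq (G j) (H j)) ->
  Teq (\sum_(j <- r) G j) (\sum_(j <- r) H j).
Proof.
elim: r => [|a r IH] Hj; first by rewrite !big_nil; exact: Teq_refl.
rewrite !big_cons; apply: TeqD; first by apply: Hj; rewrite mem_head.
by apply: IH => j jr; apply: Hj; rewrite in_cons jr orbT.
Qed.

Lemma LvU j (b : basis) : Lv j << b >> = << (j :: b.1, b.2) >>.
Proof. by rewrite /Lv linextU. Qed.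

Lemma LvD j : {morph Lv j : x y / x + y}.
Proof. exact: linextD. Qed.
Lemma LvZ j (c : C) x : Lv j (c *: x) = c *: Lv j x.
Proof. exact: linextZ. Qed.
Lemma LvB j x y : Lv j (x - y) = Lv j x - Lv j y.
Proof. exact: linextB. Qed.
Lemma Lv_sum j J (r : seq J) (G : J -> F) :
  Lv j (\sum_(i <- r) G i) = \sum_(i <- r) Lv j (G i).
Proof. exact: linext_sum. Qed.

Lemma swap_at_cons a j (w : word) :
  swap_at a.+1 (j :: w) = ((swap_at a w).1, j :: (swap_at a w).2).
Proof. by rewrite /swap_at /=; case: (drop a w) => [|x [|y r]]. Qed.

Lemma Lv_relgen j w i s :
  Lv j (relgen w i s) = if (0 < i < size w)%N then relgen (j :: w) i s else 0.
Proof.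
rewrite /relgen /=; case: ifP => [/andP[i0 iw]|_]; last exact: linext0.
have -> : (0 < i < (size w).+1)%N by rewrite i0 ltnW.
have -> : ((size w).+1 - i.+1 = (size w - i.+1).+1)%N.
  by rewrite subSS subnSK.
rewrite swap_at_cons; case: (swap_at _ w) => c w' /=.
by rewrite LvB LvZ !LvU.
Qed.

Lemma rel_Lv j x : rel_space x -> rel_space (Lv j x).
Proof.
move=> [g ->]; rewrite Lv_sum; apply: rel_sum => t.
rewrite LvZ Lv_relgen; case: ifP => _.
  by apply: relZ; apply: rel_relgen.
by rewrite scaler0; exact: rel0.
Qed.

Lemma Teq_Lv j x y : Teq x y -> Teq (Lv j x) (Lv j y).
Proof. by rewrite /Teq -LvB; apply: rel_Lv. Qed.

Lemma Teq_swap0 (a x : I) (r : word) tau :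
  Teq (((-1) ^+ (par x * par a)) *: << ((a :: x :: r, tau) : basis) >>)
      << ((x :: a :: r, lmul_s (size r).+1 tau) : basis) >>.
Proof.
have := rel_relgen (x :: a :: r) (size r).+1 tau.
by rewrite /relgen /= ltnSn subnn.
Qed.

Lemma cycle_mulS d k s : (k <= d)%N ->
  cycle_mul d.+1 k s = lmul_s d (cycle_mul d k s).
Proof.
move=> kd; rewrite /cycle_mul subSn // -addn1 iotaD foldl_cat /=.
by rewrite subnKC.
Qed.

Lemma cycle_mul_id d s : cycle_mul d d s = s.
Proof. by rewrite /cycle_mul subnn. Qed.

Lemma sign_sq k : ((-1) ^+ k * (-1) ^+ k = 1 :> C).
Proof. by rewrite -exprD -signr_odd addnn odd_double. Qed.

Lemma move_lemma p (w : word) (x : I) rest s : drop p w = x :: rest ->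
  Teq (((-1) ^+ (par x * \sum_(t <- take p w) par t)) *:
        << ((x :: take p w ++ rest, cycle_mul (size w) (size w - p) s) : basis) >>)
      << ((w, s) : basis) >>.
Proof.
elim: p w => [|p IH] [|a w'] //= hd.
- case: hd => -> ->; rewrite big_nil muln0 expr0 scale1r ?subn0 cycle_mul_id.
  exact: Teq_refl.
- have hw' : w' = take p w' ++ x :: rest by rewrite -hd cat_take_drop.
  have pw : (p < size w')%N.
    by rewrite ltnNge; apply/negP => /drop_oversize; rewrite hd.
  have := IH w' hd.
  set r := take p w' ++ rest; set tau := cycle_mul _ _ s => IHw.
  have sz : size w' = (size r).+1.
    by rewrite {1}hw' /r !size_cat /= addnS.
  rewrite subSS cycle_mulS ?leq_subr // -/tau sz.
  have <- : Lv a << ((w', s) : basis) >> = << ((a :: w', s) : basis) >> by rewrite LvU.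
  apply: (Teq_trans _ _ _ _ (Teq_Lv a _ _ IHw)); rewrite LvZ LvU /=.
  apply: (Teq_trans _ (((-1) ^+ (par x * \sum_(t <- a :: take p w') par t)) *:
     (((-1) ^+ (par x * par a)) *: << ((a :: x :: r, tau) : basis) >>))).
    by apply: TeqZ; apply: Teq_sym; apply: Teq_swap0.
  apply: Teq_eq; rewrite scalerA big_cons mulnDr exprD.
  by rewrite mulrAC sign_sq mul1r.
Qed.

Lemma sum_pick (x : I) (G : I -> F) :
  \sum_(j : I) (if Some x == Some j then G j else 0) = G x.
Proof.
rewrite (bigD1 x) //= eqxx big1 ?addr0 // => j njx.
by case: eqP => // -[ejx]; rewrite ejx eqxx in njx.
Qed.

Lemma euler_basis (w : word) s :
  Teq (\sum_(j : I) Lv j (Ldual j << ((w, s) : basis) >>))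
      ((size w)%:R *: << ((w, s) : basis) >>).
Proof.
under eq_bigr => j _ do rewrite /Ldual linextU /= Lv_sum.
rewrite exchange_big /=.
have -> : (size w)%:R *: << ((w, s) : basis) >> =
    \sum_(1%N <= k < (size w).+1) (<< ((w, s) : basis) >> : F).
  by rewrite sumr_const_nat subn1 /= scaler_nat.
apply: (@Teq_sum nat (index_iota 1%N (size w).+1)) => k; rewrite mem_index_iota => /andP[k1 kd].
have {}kd : (k <= size w)%N by [].
have [x [rest hd]] : exists x rest, drop (size w - k) w = x :: rest.
  case E: (drop (size w - k) w) => [|x rest]; last by exists x, rest.
  have := size_drop (size w - k) w; rewrite E subKn // => k0.
  by rewrite -k0 in k1.
rewrite hd /=.
under eq_bigr => i _ do rewrite (fun_if (Lv i)) [Lv i 0]linext0.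
rewrite (sum_pick x (fun i => Lv i _)) LvZ LvU /=.
have -> : drop (size w - k).+1 w = rest.
  by have := drop_drop w 1 (size w - k); rewrite hd /= drop0 add1n => <-.
have := move_lemma (size w - k) w x rest s hd.
by rewrite subKn.
Qed.

Lemma homog0 d : homog d 0.
Proof. by move=> b; rewrite mcoeff0 eqxx. Qed.

Lemma homogD d x y : homog d x -> homog d y -> homog d (x + y).
Proof.
move=> hx hy b; rewrite mcoeffD.
have [E|/hx //] := eqVneq x@_b 0.
by rewrite E add0r => /hy.
Qed.

Lemma homogZ d (c : C) x : homog d x -> homog d (c *: x).
Proof.
move=> hx b; rewrite mcoeffZ.
have [E|/hx //] := eqVneq x@_b 0.
by rewrite E mulr0 eqxx.
Qed.

Lemma homog_sum d (J : eqType) (r : seq J) (G : J -> F) :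
  (forall j, j \in r -> homog d (G j)) -> homog d (\sum_(j <- r) G j).
Proof.
elim: r => [|a r IH] Hj; first by rewrite big_nil; exact: homog0.
rewrite big_cons; apply: homogD; first by apply: Hj; rewrite mem_head.
by apply: IH => j jr; apply: Hj; rewrite in_cons jr orbT.
Qed.

Lemma homogU d (b : basis) : size b.1 = d -> homog d << b >>.
Proof.
move=> hb b'; rewrite mcoeffU; have [E|_] := eqVneq b b'; first by rewrite -E.
by rewrite mulr0n eqxx.
Qed.

Lemma homog_linext d e f x :
  (forall b : basis, size b.1 = d -> homog e (f b)) -> homog d x ->
  homog e (linext f x).
Proof.
move=> hf hx; rewrite /linext; apply: homog_sum => b bx; apply: homogZ.
by apply: hf; apply: hx; rewrite mcoeff_neq0.
Qed.

Lemma homog_Ldual j d x : homog d.+1 x -> homog d (Ldual j x).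
Proof.
apply: homog_linext => -[w s] /= sw; apply: homog_sum => k.
rewrite mem_index_iota => /andP[k1 kd]; case: ifP => _; last exact: homog0.
apply: homogZ; apply: homogU => /=.
rewrite size_cat size_take size_drop sw.
have kd' : (k <= d.+1)%N by rewrite -sw.
have -> : (d.+1 - k < d.+1)%N by rewrite ltn_subrL k1.
by rewrite subSS subnKC // leq_subLR -addn1 addnC leq_add2r.
Qed.

Lemma homog_Lv j d x : homog d x -> homog d.+1 (Lv j x).
Proof. by apply: homog_linext => -[w s] /= sw; apply: homogU => /=; rewrite sw. Qed.

Lemma euler d x : homog d x ->
  Teq (\sum_(j : I) Lv j (Ldual j x)) (d%:R *: x).
Proof.
move=> hx; rewrite -{1 2}(linext_id x) /linext.
under eq_bigr => j _ do rewrite [Ldual j _]linext_sum [Lv j _]Lv_sum.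
rewrite exchange_big /= scaler_sumr.
apply: Teq_sum => b bx.
under eq_bigr => j _ do rewrite linextZ LvZ.
rewrite -scaler_sumr scalerA mulrC -scalerA; apply: TeqZ.
have := hx b; rewrite mcoeff_neq0 => /(_ bx) <-.
by case: b {bx} => w s; exact: euler_basis.
Qed.

Definition S d (x : F) : F :=
  \sum_(u : d.-tuple I)
     foldr (fun i y => Lv i y) (foldl (fun y i => Ldual i y) x u) u.

Lemma sum_tupleS d (G : d.+1.-tuple I -> F) :
  \sum_(u : d.+1.-tuple I) G u =
  \sum_(j : I) \sum_(t : d.-tuple I) G [tuple of j :: t].
Proof.
rewrite pair_big /=.
rewrite (reindex (fun p : I * d.-tuple I => [tuple of p.1 :: p.2])) //=.
exists (fun u : d.+1.-tuple I => (thead u, [tuple of behead u])) => [[j t] _ | u _].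
  by congr (_, _); apply: val_inj.
by rewrite [RHS]tuple_eta.
Qed.

Lemma SS d x : S d.+1 x = \sum_(j : I) Lv j (S d (Ldual j x)).
Proof.
rewrite /S sum_tupleS; apply: eq_bigr => j _.
by rewrite Lv_sum.
Qed.

Lemma S0 x : S 0 x = x.
Proof.
rewrite /S (eq_bigr (fun _ => x)) => [|u _]; last by rewrite tuple0.
by rewrite sumr_const card_tuple expn0.
Qed.

Lemma S_main d x : homog d x -> Teq (S d x) (d`!%:R *: x).
Proof.
elim: d x => [|d IH] x hx.
  by rewrite S0 fact0 scale1r; exact: Teq_refl.
rewrite SS.
apply: (Teq_trans _ (\sum_(j : I) Lv j (d`!%:R *: Ldual j x))).
  by apply: Teq_sum => j _; apply: Teq_Lv; apply: IH; apply: homog_Ldual.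
under eq_bigr => j _ do rewrite LvZ.
rewrite -scaler_sumr factS natrM mulrC -scalerA; apply: TeqZ.
exact: euler.
Qed.
End Aux.

Theorem proposition3p6 (R : realType) (m n : nat) (hm : (0 < m)%N) (hn : (0 < n)%N)
  (d : nat) (hd : (1 <= d)%N) (phi : F R m n) :
  homog d phi -> Teq (A d phi) phi.
Proof.
move=> hphi.
have H := @TeqZ R m n (d`!%:R)^-1 _ _ (@S_main R m n d phi hphi).
have -> : A d phi = (d`!%:R)^-1 *: S R m n d phi by [].
apply: (@Teq_trans R m n _ _ _ H); apply: Teq_eq.
rewrite scalerA mulVf ?scale1r //.
by rewrite pnatr_eq0 -lt0n fact_gt0.
Qed.
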